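(* For any acyclic hypergraph $\mathcal{H}$, $\kappa(\mathcal{H})=\rho^*(\mathcal{H})$.
   Context: A hypergraph $\mathcal{H}=(V,E)$ (with $V=\bigcup_{e\in E}e$) is acyclic ($\alpha$-acyclic) if it admits a join tree: a tree whose nodes are the edges of $E$ such that for every vertex $v$, the nodes containing $v$ form a connected subtree. For $S\subseteq V$, $\mathcal{H}[S]$ is the hypergraph with vertex set $S$ and edge set $\{S\cap e : e\in E,\ S\cap e\neq\emptyset\}$. $\mathsf{red}(\mathcal{H})$ is obtained by removing every edge $e$ for which there is another edge $e'\neq e$ with $e\subseteq e'$. $\tau^*$ is the value of a maximum fractional edge packing (equivalently, minimum fractional vertex cover) and $\rho^*$ the value of a minimum fractional edge cover. $\kappa(\mathcal{H})=\max_{S\subseteq V}\tau^*(\mathsf{red}(\mathcal{H}[S]))$. *)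

(* Defs.v *)
From HB Require Import structures.
From mathcomp Require Import all_boot all_order all_algebra.
From mathcomp Require Import boolp classical_sets reals.
Set Implicit Arguments. Unset Strict Implicit. Unset Printing Implicit Defensive.
Import Order.TTheory GRing.Theory Num.Theory.
Local Open Scope ring_scope.

Section Hyper.
Variable T : finType.
Implicit Types (E : {set {set T}}) (S : {set T}).

Definition hvertices E : {set T} := \bigcup_(e in E) e.

Definition hinduced E S : {set {set T}} :=
  [set S :&: e | e in [set e in E | S :&: e != finset.set0]].

Definition hred E : {set {set T}} :=
  [set e in E | ~~ [exists e' in E, (e' != e) && (e \subset e')]].

(* join tree: t is a tree (symmetric irreflexive adjacency relation on the
   nodes E, connected, with #|E|-1 undirected edges) such that for every
   vertex v the nodes containing v induce a connected subtree *)
Definition is_join_tree E (t : rel {set T}) : Prop :=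
  [/\ (forall x y, t x y -> (x \in E) && (y \in E)),
      (forall x y, t x y = t y x) /\ (forall x, ~~ t x x),
      (forall x y, x \in E -> y \in E -> connect t x y),
      #|[set p : {set T} * {set T} | t p.1 p.2]| = 2 * (#|E|).-1
    & (forall v x y, x \in E -> y \in E -> v \in x -> v \in y ->
        connect (fun a b => [&& t a b, v \in a & v \in b]) x y)].

Definition acyclic E : Prop := exists t, is_join_tree E t.

Variable R : realType.

Definition is_frac_packing E (w : {set T} -> R) : Prop :=
  (forall e, e \in E -> 0 <= w e) /\
  (forall v, v \in hvertices E -> \sum_(e in E | v \in e) w e <= 1).

Definition is_frac_cover E (w : {set T} -> R) : Prop :=
  (forall e, e \in E -> 0 <= w e) /\
  (forall v, v \in hvertices E -> 1 <= \sum_(e in E | v \in e) w e).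

Definition tau_star E : R :=
  sup (classical_sets.image [set w | is_frac_packing E w]%classic
         (fun w => \sum_(e in E) w e)).

Definition rho_star E : R :=
  inf (classical_sets.image [set w | is_frac_cover E w]%classic
         (fun w => \sum_(e in E) w e)).

Definition kappa E : R :=
  \big[Num.max/0]_(S : {set T} | S \subset hvertices E)
     tau_star (hred (hinduced E S)).
End Hyper.

(* Main.v *)
Require Import Defs.
From mathcomp Require Import all_boot all_order all_algebra.
From mathcomp Require Import boolp classical_sets reals.
From mathcomp Require Import zify.
From mathcomp Require Import ssrbool seq fintype finset.
Set Implicit Arguments. Unset Strict Implicit. Unset Printing Implicit Defensive.
Import Order.TTheory GRing.Theory Num.Theory.


Section Rooted.
Variable T : finType.
Variable E : {set {set T}}.
Variable par : {set T} -> {set T}.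
Variable rk : {set T} -> nat.
Hypothesis Hpar : forall e, e \in E -> par e \in E.
Hypothesis Hrk : forall e, e \in E -> par e != e -> rk e < rk (par e).

Definition istop x e := [&& e \in E, x \in e & ((par e == e) || (x \notin par e))].
Hypothesis Htop : forall x e f, istop x e -> istop x f -> e = f.

Definition anc a e := exists k, iter k par e = a.

Lemma iter_in k e : e \in E -> iter k par e \in E.
Proof. by move=> He; elim: k => //= k IH; apply: Hpar. Qed.

Lemma rk_iter k e : e \in E -> rk e <= rk (iter k par e).
Proof.
move=> He; elim: k => //= k IH; apply: leq_trans IH _.
have Hi := iter_in k He.
case: (eqVneq (par (iter k par e)) (iter k par e)) => [->//|/(Hrk Hi)/ltnW//].
Qed.

Lemma anc_refl e : anc e e. Proof. by exists 0. Qed.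

Lemma anc_trans a b c : anc a b -> anc b c -> anc a c.
Proof. by move=> [i <-] [j <-]; exists (i + j); rewrite iterD. Qed.

Lemma anc_in a e : e \in E -> anc a e -> a \in E.
Proof. by move=> He [k <-]; apply: iter_in. Qed.

Lemma anc_rk a e : e \in E -> anc a e -> rk e <= rk a.
Proof. by move=> He [k <-]; apply: rk_iter. Qed.

Lemma iter_fix k e : par e = e -> iter k par e = e.
Proof. by move=> H; elim: k => //= k ->. Qed.

Lemma anc_eq a e : e \in E -> anc a e -> rk a <= rk e -> a = e.
Proof.
move=> He [[|k] <-] // Hr.
move: Hr; rewrite iterSr.
case: (eqVneq (par e) e) => [Hf|Hne].
  by rewrite Hf iter_fix.
have H1 := rk_iter k (Hpar He).
have H2 := Hrk He Hne.
have : rk e < rk (iter k par (par e)) by apply: leq_trans H2 H1.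
by rewrite ltnNge => /negbTE ->.
Qed.

Lemma anc_chain a b m : anc a m -> anc b m -> anc a b \/ anc b a.
Proof.
move=> [i <-] [j <-].
case: (leqP i j) => Hij.
  right; exists (j - i); by rewrite -iterD subnK.
left; exists (i - j); rewrite -iterD subnK //; exact: ltnW.
Qed.

Lemma anc_rk_le a b m : m \in E -> anc a m -> anc b m -> rk a <= rk b -> anc b a.
Proof.
move=> Hm Ha Hb Hr.
case: (anc_chain Ha Hb) => // Hab.
have Hbin := anc_in Hm Hb.
by rewrite (anc_eq Hbin Hab Hr); exact: anc_refl.
Qed.

Definition bnd := \max_(e in E) rk e.

Lemma climb x m : m \in E -> x \in m ->
  exists k, istop x (iter k par m) /\ (forall i, i <= k -> x \in iter i par m).
Proof.
move=> Hm Hx.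
have [n Hn] : exists n, bnd - rk m <= n by exists (bnd - rk m).
elim: n m Hm Hx Hn => [|n IH] m Hm Hx Hn.
  exists 0; split; last by case.
  rewrite /istop Hm Hx /=.
  case: (eqVneq (par m) m) => //= Hne.
  have H1 := Hrk Hm Hne.
  have H2 : rk (par m) <= bnd by apply: leq_bigmax_cond; apply: Hpar.
  by move: Hn; rewrite leqn0 subn_eq0 => /(leq_trans H2); rewrite leqNgt H1.
case Ht: (istop x m).
  by exists 0; split => // -[].
move/negbT: Ht; rewrite /istop Hm Hx /= negb_or negbK => /andP[Hne Hxp].
have H1 := Hrk Hm Hne.
have H2 : rk (par m) <= bnd by apply: leq_bigmax_cond; apply: Hpar.
have Hn' : bnd - rk (par m) <= n.
  by rewrite -ltnS; apply: leq_trans Hn; rewrite ltn_sub2l // (leq_trans H1).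
have [k [Hk1 Hk2]] := IH _ (Hpar Hm) Hxp Hn'.
exists k.+1; split; first by rewrite iterSr.
by move=> [|i] // Hi; rewrite iterSr; apply: Hk2.
Qed.

Definition topn x := odflt set0 [pick e | istop x e].

Lemma topnP x m : m \in E -> x \in m ->
  [/\ istop x (topn x), anc (topn x) m &
      forall a, anc a m -> anc (topn x) a -> x \in a].
Proof.
move=> Hm Hx.
have [k [Hk1 Hk2]] := climb Hm Hx.
have Ht : topn x = iter k par m.
  rewrite /topn; case: pickP => [e He|/(_ (iter k par m))]; last by rewrite Hk1.
  by apply: Htop He Hk1.
split; first by rewrite Ht.
  by rewrite Ht; exists k.
move=> a [i Hi] Hta.
case: (leqP i k) => Hik; first by rewrite -Hi; apply: Hk2.
have Hat : anc a (topn x).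
  by exists (i - k); rewrite Ht -iterD subnK // ltnW.
have Htin : topn x \in E by rewrite Ht iter_in.
have := anc_eq Htin Hat.
have := anc_rk (anc_in Htin Hat) Hta => Hr /(_ Hr) ->.
by rewrite Ht; apply: Hk2.
Qed.

Lemma topn_in x m : m \in E -> x \in m -> topn x \in E.
Proof. by move=> Hm Hx; case: (topnP Hm Hx) => /andP[]. Qed.


Lemma claim2 (S : {set T}) n (M : {set {set T}}) : #|M| <= n ->
 (forall e, e \in M -> exists2 v, v \in S & istop v e) ->
 exists X I : {set T}, [/\ X \subset S, I \subset S,
   (forall e, e \in M -> exists2 x, x \in X & x \in e),
   (forall y z e, y \in I -> z \in I -> e \in E -> y \in e -> z \in e -> y = z) &
   ((forall y, y \in I -> exists2 a, a \in M & istop y a) /\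
   #|X| <= #|I|) ].
Proof.
elim: n M => [|n IH] M HMn HM.
  exists set0, set0; split => //; try by rewrite sub0set.
  - by move=> e; move: HMn; rewrite leqn0 => /eqP/cards0_eq ->; rewrite inE.
  - by move=> y z e; rewrite inE.
  - by split => // y; rewrite inE.
case: (set_0Vmem M) => [->|[e0 He0]].
  exists set0, set0; split => //; try by rewrite sub0set.
  - by move=> e; rewrite inE.
  - by move=> y z e; rewrite inE.
  - by split => // y; rewrite inE.
case: (arg_minnP rk He0) => l Hl0 Hlmin.
have Hl : l \in M := Hl0.
have [v Hv Hvt] := HM l Hl.
have HlE : l \in E by case/and3P: Hvt.
have Hvl : v \in l by case/and3P: Hvt.
have HvSl : v \in S :&: l by rewrite inE Hv.
case: (arg_maxnP (fun z => rk (topn z)) HvSl) => x Hx Hxmax.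
move: Hx => /setIP[HxS Hxl].
pose M' := [set e in M | x \notin e].
have HM'n : #|M'| <= n.
  have : #|M'| <= #|M :\ l|.
    apply: subset_leq_card; apply/subsetP => e; rewrite !inE => /andP[He1 He2].
    rewrite He1 andbT; apply/eqP => Hel; move: He2; by rewrite Hel Hxl.
  move=> /leq_trans; apply; move: HMn; by rewrite (cardsD1 l M) Hl.
have HM' : forall e, e \in M' -> exists2 v, v \in S & istop v e.
  by move=> e; rewrite inE => /andP[/HM].
have [X' [I' [HX HI Hcov Hpw [Htops Hcard]]]] := IH M' HM'n HM'.
have Htv : topn v = l.
  by case: (topnP HlE Hvl) => Ht _ _; apply: Htop Ht Hvt.
have Hsep : forall y e, y \in I' -> e \in E -> v \in e -> y \in e -> False.
  move=> y e HyI He Hve Hye.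
  have [a Ha' Hya] := Htops y HyI.
  move: Ha'; rewrite inE => /andP[HaM Hxa].
  have HaE : a \in E by case/and3P: Hya.
  have [_ Hle _] := topnP He Hve; rewrite Htv in Hle.
  have [Hyt Hae Hyp] := topnP He Hye.
  have Hty : topn y = a by apply: Htop Hyt Hya.
  rewrite Hty in Hae Hyp.
  case: (anc_chain Hle Hae) => Hc.
    have Hal : rk a <= rk l by apply: anc_rk.
    have := anc_eq HaE Hc (Hlmin a HaM) => Hla.
    by move: Hxa; rewrite -Hla Hxl.
  have Hyl : y \in l by apply: Hyp.
  have HyS : y \in S by apply: (subsetP HI).
  have Hr : rk a <= rk (topn x).
    by rewrite -Hty; apply: Hxmax; apply/setIP.
  have [_ Hxt Hxp] := topnP HlE Hxl.
  have Hta : anc (topn x) a by apply: anc_rk_le HlE Hc Hxt Hr.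
  by move: Hxa; rewrite (Hxp a Hc Hta).
have HvI' : v \notin I'.
  by apply/negP => HvI; apply: (Hsep v l HvI HlE Hvl Hvl).
exists (x |: X'), (v |: I'); split.
- by rewrite subUset sub1set HxS HX.
- by rewrite subUset sub1set Hv HI.
- move=> e HeM; case Hxe: (x \in e); first by exists x; rewrite ?setU11.
  have : e \in M' by rewrite inE HeM Hxe.
  by move=> /Hcov[x' Hx' Hx'e]; exists x'; rewrite // setU1r.
- move=> y z e; case/setU1P => [->|Hy]; case/setU1P => [->|Hz] // He H1 H2.
  + by case: (Hsep z e Hz He H1 H2).
  + by case: (Hsep y e Hy He H2 H1).
  + by apply: Hpw Hy Hz He H1 H2.
split.
  move=> y; case/setU1P => [->|Hy]; first by exists l.
  by have [a] := Htops y Hy; rewrite inE => /andP[Ha _] Hya; exists a.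
  rewrite cardsU1 (cardsU1 v) HvI' add1n.
  by apply: leq_trans (leq_add (leq_b1 _) Hcard) _; rewrite add1n.
Qed.

Lemma claim1 n (S : {set T}) : #|S| <= n ->
 (forall z, z \in S -> exists2 e, e \in E & z \in e) ->
 exists (I : {set T}) (C : {set {set T}}), [/\ I \subset S, C \subset E,
   (forall y z e, y \in I -> z \in I -> e \in E -> y \in e -> z \in e -> y = z),
   (forall z, z \in S -> exists2 c, c \in C & z \in c) &
   #|C| <= #|I| ].
Proof.
elim: n S => [|n IH] S HSn HS.
  exists set0, set0; split => //; try by rewrite sub0set.
  - by move=> y z e; rewrite inE.
  - by move=> z; move: HSn; rewrite leqn0 => /eqP/cards0_eq ->; rewrite inE.
  - by rewrite !cards0.
case: (set_0Vmem S) => [HS0|[z0 Hz0]].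
  exists set0, set0; split => //; try by rewrite sub0set.
  - by move=> y z e; rewrite inE.
  - by move=> z; rewrite HS0 inE.
  - by rewrite !cards0.
case: (arg_minnP (fun z => rk (topn z)) Hz0) => y Hy0 Hymin.
have Hy : y \in S := Hy0.
have [ey Hey Hyey] := HS y Hy.
pose nn := topn y.
have [Hnt _ _] := topnP Hey Hyey.
have HnE : nn \in E by case/and3P: Hnt.
have Hyn : y \in nn by case/and3P: Hnt.
pose S' := [set z in S | z \notin nn].
have HS'n : #|S'| <= n.
  have : #|S'| <= #|S :\ y|.
    apply: subset_leq_card; apply/subsetP => e; rewrite !inE => /andP[He1 He2].
    rewrite He1 andbT; apply/eqP => Hel; move: He2; by rewrite Hel Hyn.
  move=> /leq_trans; apply; move: HSn; by rewrite (cardsD1 y S) Hy.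
have HS' : forall z, z \in S' -> exists2 e, e \in E & z \in e.
  by move=> z; rewrite inE => /andP[/HS].
have [I' [C' [HI HC Hpw Hcov Hcard]]] := IH S' HS'n HS'.
have Hsep : forall z e, z \in I' -> e \in E -> y \in e -> z \in e -> False.
  move=> z e HzI He Hye Hze.
  have := subsetP HI z HzI; rewrite inE => /andP[HzS Hzn].
  have [_ Hne _] := topnP He Hye.
  have [_ Hze' Hzp] := topnP He Hze.
  have Hr := Hymin z HzS.
  have Hta : anc (topn z) nn by apply: anc_rk_le He Hne Hze' Hr.
  by move: Hzn; rewrite (Hzp nn Hne Hta).
have HyI' : y \notin I'.
  apply/negP => HyI; have := subsetP HI y HyI; by rewrite inE Hyn andbF.
exists (y |: I'), (nn |: C'); split.
- apply/subsetP => z; case/setU1P => [->//|/(subsetP HI)]; by rewrite inE => /andP[].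
- by rewrite subUset sub1set HnE HC.
- move=> a b e; case/setU1P => [->|Ha]; case/setU1P => [->|Hb] // He H1 H2.
  + by case: (Hsep b e Hb He H1 H2).
  + by case: (Hsep a e Ha He H2 H1).
  + by apply: Hpw Ha Hb He H1 H2.
- move=> z HzS; case Hzn: (z \in nn); first by exists nn; rewrite ?setU11.
  have : z \in S' by rewrite inE HzS Hzn.
  by move=> /Hcov[c Hc Hzc]; exists c; rewrite // setU1r.
- rewrite (cardsU1 nn) (cardsU1 y) HyI' add1n.
  by apply: leq_trans (leq_add (leq_b1 _) Hcard) _; rewrite add1n.
Qed.

End Rooted.


Section JT.
Variable T : finType.
Lemma connect_step (r : rel {set T}) a b : connect r a b -> a != b -> exists z, r a z.
Proof.
case/connectP => [[|z p]] /=; first by move=> _ ->; rewrite eqxx.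
by case/andP => H _ _ _; exists z.
Qed.

Lemma path_avoid (r : rel {set T}) l x p : path r x p -> all (fun a => a != l) (x :: p) ->
  path [rel a b | [&& r a b, a != l & b != l]] x p.
Proof.
elim: p x => //= z p IH x /andP[Hxz Hp] /and3P[Hx Hz Ha].
by rewrite Hxz Hx Hz /= IH //= Hz.
Qed.

Lemma connect_avoid (t r : rel {set T}) l q :
  (forall a b, r a b -> t a b) -> (forall x y, t x y = t y x) ->
  (forall y, t l y -> y = q) ->
  forall x y, x != l -> y != l -> connect r x y ->
  connect [rel a b | [&& r a b, a != l & b != l]] x y.
Proof.
move=> Hrt Hsym Hq x y Hx Hy /connectP[p0 Hp0 Hy0].
case: (shortenP Hp0) Hy0 => p Hp Hu _ Hyl.
apply/connectP; exists p => //.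
apply: path_avoid => //.
apply/allP => a Ha; apply/eqP => Hal; subst a.
move: Ha; rewrite inE => /orP[/eqP Hxl|Hlp]; first by move: Hx; rewrite Hxl eqxx.
case/splitPr: Hlp Hp Hu Hyl => p1 p2.
rewrite cat_path => /andP[Hp1 /= /andP[Hr1 Hp2]].
case: p2 Hp2 => [|z p2] Hp2 Hu Hyl.
  by move: Hyl; rewrite last_cat /= => Hyl; move: Hy; rewrite Hyl eqxx.
move: Hp2 => /= /andP[Hr2 _].
have Hz : z = q by apply: Hq; apply: Hrt.
have Hw : last x p1 = q by apply: Hq; rewrite Hsym; apply: Hrt.
have Hu' : uniq ((x :: p1) ++ [:: l, z & p2]) by [].
move: Hu'; rewrite cat_uniq => /and3P[_ Hh _].
move: Hh; apply/negP; rewrite negbK; apply/hasP; exists z; first by rewrite !inE eqxx orbT.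
by rewrite Hz -Hw mem_last.
Qed.


Definition struct_ok (E : {set {set T}}) (par : {set T} -> {set T}) (rk : {set T} -> nat) :=
  [/\ (forall e, e \in E -> par e \in E),
      (forall e, e \in E -> par e != e -> rk e < rk (par e)) &
      (forall x e f, istop E par x e -> istop E par x f -> e = f)].

Lemma struct_small (E : {set {set T}}) : #|E| <= 1 -> struct_ok E id (fun _ => 0).
Proof.
move=> H; split => //; first by move=> e _; rewrite eqxx.
move=> x e f /and3P[He _ _] /and3P[Hf _ _].
by move/card_le1_eqP: H => H; apply: H.
Qed.

Lemma sum_deg (t : rel {set T}) :
  \sum_x #|[set y | t x y]| = #|[set p : {set T} * {set T} | t p.1 p.2]|.
Proof.
rewrite -sum1_card.
under eq_bigr => x _ do rewrite -sum1_card.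
rewrite pair_big_dep /=; apply: eq_bigl => -[a b]; by rewrite !inE.
Qed.

Lemma struct_ex n (E : {set {set T}}) t : #|E| <= n -> is_join_tree E t ->
  exists par rk, struct_ok E par rk.
Proof.
elim: n E t => [|n IH] E t HEn [Ht1 [Hsym Hirr] Hconn Hcnt Hri].
  by exists id, (fun _ => 0); apply: struct_small; apply: leq_trans HEn _.
case: (leqP #|E| 1) => [Hle1|Hgt1].
  by exists id, (fun _ => 0); apply: struct_small.
pose deg x := #|[set y | t x y]|.
have [l Hl Hdl] : exists2 l, l \in E & deg l <= 1.
  case: (boolP [exists x in E, deg x <= 1]) => [/existsP[x /andP[Hx Hd]]|Hno].
    by exists x.
  exfalso.
  have H2 : forall x, x \in E -> 2 <= deg x.
    move=> x Hx; rewrite leqNgt; apply/negP => Hd; move/negP: Hno; apply.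
    by apply/existsP; exists x; rewrite Hx.
  have : 2 * #|E| <= \sum_x deg x.
    apply: (@leq_trans (\sum_(x in E) deg x)).
      rewrite mulnC -sum_nat_const; apply: leq_sum => x Hx; exact: H2.
    rewrite [X in _ <= X](bigID (fun x => x \in E)) /=; apply: leq_addr.
  rewrite /deg sum_deg Hcnt; lia.
have [e1 He1 He1l] : exists2 e, e \in E & e != l.
  have : 0 < #|E :\ l| by move: Hgt1; rewrite (cardsD1 l E) Hl; lia.
  by case/card_gt0P => e; rewrite !inE => /andP[]; exists e.
have [q Hq] : exists q, t l q.
  by apply: connect_step (Hconn _ _ Hl He1) _; rewrite eq_sym.
have Hqq : forall y, t l y -> y = q.
  move=> y Hy; move/card_le1_eqP: Hdl => H; apply: H; by rewrite inE.
have HqE : q \in E by case/andP: (Ht1 _ _ Hq).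
have Hql : q != l by apply/eqP => Hql; move: (Hirr l); rewrite -{2}Hql Hq.
pose E' := E :\ l.
pose t' := [rel a b | [&& t a b, a != l & b != l]].
have HJ : is_join_tree E' t'.
  split.
  - move=> x y /and3P[Hxy Hx Hy]; have /andP[Hx' Hy'] := Ht1 _ _ Hxy.
    by rewrite !inE Hx Hx' Hy Hy'.
  - split.
      move=> x y /=; rewrite Hsym; by case: (t y x); case: (x != l); case: (y != l).
    by move=> x /=; rewrite (negbTE (Hirr x)).
  - move=> x y; rewrite !inE => /andP[Hx HxE] /andP[Hy HyE].
    exact: (@connect_avoid t t l q (fun a b H => H) Hsym Hqq x y Hx Hy (Hconn _ _ HxE HyE)).
  - have Hp : #|[set p : {set T} * {set T} | t p.1 p.2]| =
              #|[set p : {set T} * {set T} | t' p.1 p.2]| + 2.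
      rewrite (cardsD1 (l, q)) inE /= Hq (cardsD1 (q, l)) !inE /= -Hsym Hq.
      have -> : ((q, l) != (l, q)) = true.
        by apply/negP => /eqP [] /eqP; rewrite (negbTE Hql).
      rewrite /= addnA addnC; congr (_ + _).
      apply: eq_card => -[a b].
      rewrite !inE /=.
      case Hab: (t a b); last by rewrite !andbF.
      case: (eqVneq a l) => [Hal|Hal].
        subst a; have := Hqq _ Hab => ->; by rewrite eqxx /= andbF.
      case: (eqVneq b l) => [Hbl|Hbl].
        subst b; rewrite Hsym in Hab; have := Hqq _ Hab => ->; by rewrite eqxx.
      rewrite !andbT; apply/andP; split; apply/negP => /eqP [] ? ?; subst.
        by rewrite eqxx in Hbl.
      by rewrite eqxx in Hal.
    move: Hcnt; rewrite Hp /E' (cardsD1 l E) Hl; move: (#|[set p : {set T} * {set T} | t' p.1 p.2]|) (#|E :\ l|) => a b H; clear -H; lia.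
  - move=> v x y; rewrite !inE => /andP[Hx HxE] /andP[Hy HyE] Hvx Hvy.
    have := @connect_avoid t (fun a b => [&& t a b, v \in a & v \in b]) l q
       (fun a b => fun H => (proj1 (andP H))) Hsym Hqq x y Hx Hy (Hri v x y HxE HyE Hvx Hvy).
    move=> H; rewrite (@eq_connect _ _ [rel a b | [&& [&& t a b, v \in a & v \in b], a != l & b != l]]) //.
    move=> a b /=; by case: (t a b); case: (a != l); case: (b != l); case: (v \in a); case: (v \in b).
have HE'n : #|E'| <= n by move: HEn; rewrite /E' (cardsD1 l E) Hl; lia.
have [par' [rk' [Hp' Hr' Ht']]] := IH E' t' HE'n HJ.
have Hpriv : forall x f, x \in l -> f \in E -> f != l -> x \in f -> x \in q.
  move=> x f Hxl Hf Hfl Hxf.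
  have := Hri x l f Hl Hf Hxl Hxf.
  move/connect_step => /(_ _) [|z /and3P[Hlz _ Hxz]]; first by rewrite eq_sym.
  by rewrite -(Hqq z Hlz).
pose par e := if e == l then q else par' e.
pose rk e := if e == l then 0 else (rk' e).+1.
have Hiff : forall x e, e != l -> istop E par x e = istop E' par' x e.
  by move=> x e Hel; rewrite /istop /par /E' (negbTE Hel) !inE Hel.
exists par, rk; split.
- move=> e He; rewrite /par; case: eqP => [_|/eqP Hel]; first done.
  have : e \in E' by rewrite !inE Hel He.
  by move/Hp'; rewrite !inE => /andP[_ ->].
- move=> e He; rewrite /par /rk; case: (eqVneq e l) => [->|Hel]; first by rewrite (negbTE Hql).
  move=> Hne.
  have HeE' : e \in E' by rewrite !inE Hel He.
  have := Hp' e HeE'; rewrite !inE => /andP[Hpl _]; rewrite (negbTE Hpl) ltnS.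
  exact: Hr'.
- move=> x e f He Hf.
  case: (eqVneq e l) => [Hel|Hel]; case: (eqVneq f l) => [Hfl|Hfl].
  + by rewrite Hel Hfl.
  + exfalso; move: He Hf; rewrite Hel /istop /par eqxx (negbTE Hql) /=.
    case/and3P => _ Hxl Hxq /and3P[Hf Hxf _].
    by move: Hxq; rewrite (Hpriv x f Hxl Hf Hfl Hxf).
  + exfalso; move: He Hf; rewrite Hfl /istop /par eqxx (negbTE Hql) /=.
    case/and3P => [He Hxe _] /and3P[_ Hxl Hxq].
    by move: Hxq; rewrite (Hpriv x e Hxl He Hel Hxe).
  + by move: He Hf; rewrite (Hiff x e Hel) (Hiff x f Hfl); apply: Ht'.
Qed.

End JT.


Section RealPart.
Variable R : realType.
Variable T : finType.
Local Open Scope ring_scope.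

Lemma sum_ge_term (A : {set {set T}}) (P : pred {set T}) (F : {set T} -> R) j :
  (forall i, i \in A -> P i -> 0 <= F i) -> j \in A -> P j ->
  F j <= \sum_(i in A | P i) F i.
Proof.
move=> H0 HA HP; rewrite (bigD1 j) /=; last by rewrite HA HP.
rewrite lerDl; apply: sumr_ge0 => i /andP[/andP[Hi HPi] _]; exact: H0.
Qed.

Lemma in_hv (E : {set {set T}}) v : reflect (exists2 e, e \in E & v \in e) (v \in hvertices E).
Proof. by apply: (iffP bigcupP) => [[e He Hv]|[e He Hv]]; exists e. Qed.

Definition indep (E : {set {set T}}) (I : {set T}) :=
  forall y z e, y \in I -> z \in I -> e \in E -> y \in e -> z \in e -> y = z.

Lemma rho_ge (E : {set {set T}}) (I : {set T}) :
  indep E I -> I \subset hvertices E -> (#|I|%:R : R) <= rho_star R E.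
Proof.
move=> Hind HIv; rewrite /rho_star; apply: lb_le_inf.
  exists (\sum_(e in E) (1 : R)); exists (fun _ => 1) => //; split => // v /in_hv[e He Hve].
  by apply: (@sum_ge_term E (fun e => v \in e) (fun _ => 1) e).
move=> y [w [Hw0 Hwc] <-].
have H1 : (#|I|%:R : R) <= \sum_(v in I) \sum_(e in E | v \in e) w e.
  rewrite -sum1_card natr_sum; apply: ler_sum => v Hv; apply: Hwc.
  by move: Hv; apply/subsetP.
apply: (le_trans H1).
have -> : \sum_(v in I) \sum_(e in E | v \in e) w e = \sum_(e in E) \sum_(v in I | v \in e) w e.
  under eq_bigr => v _ do rewrite big_mkcondr.
  rewrite exchange_big /=; apply: eq_bigr => e _; by rewrite big_mkcondr.
apply: ler_sum => e He.
case: (pickP [pred v | (v \in I) && (v \in e)]) => [v0 /= /andP[Hv0 Hv0e]|Hn].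
  rewrite (eq_bigl (fun v => v == v0)) ?big_pred1_eq //.
  move=> v; apply/andP/eqP => [[Hv Hve]|->]; last by [].
  exact: Hind Hv Hv0 He Hve Hv0e.
rewrite big_pred0; first by apply: Hw0.
by move=> v; have := Hn v.
Qed.

Lemma rho_le (E : {set {set T}}) (C : {set {set T}}) :
  C \subset E -> (forall v, v \in hvertices E -> exists2 c, c \in C & v \in c) ->
  rho_star R E <= (#|C|%:R : R).
Proof.
move=> HCE Hcov; rewrite /rho_star.
set Sc := classical_sets.image _ _.
have Hlb : has_lbound Sc.
  by exists (0 : R) => y [w [Hw0 _] <-]; apply: sumr_ge0.
have := ge_inf Hlb; apply.
exists (fun e => (e \in C)%:R); last first.
  rewrite (big_setID C) /= (setIidPr HCE).
  rewrite [X in _ + X]big1 ?addr0; last by move=> e; rewrite inE => /andP[/negbTE ->].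
  rewrite (eq_bigr (fun _ => 1)); last by move=> e ->.
  by rewrite sumr_const.
split; first by move=> e _; case: (e \in C).
move=> v /Hcov[c Hc Hvc].
have HcE : c \in E by apply: (subsetP HCE).
have := @sum_ge_term E (fun e => v \in e) (fun e => (e \in C)%:R) c.
by rewrite Hc; apply => // i _ _; case: (i \in C).
Qed.

Lemma tau_le (G : {set {set T}}) (X : {set T}) :
  (forall g, g \in G -> exists2 x, x \in X & x \in g) -> tau_star R G <= (#|X|%:R : R).
Proof.
move=> Hcov; rewrite /tau_star; apply: ge_sup.
  exists (\sum_(e in G) (0 : R)); exists (fun _ => 0) => //; split => // v _.
  by rewrite big1.
move=> y [w [Hw0 Hwp] <-].
apply: (@le_trans _ _ (\sum_(g in G) \sum_(x in X | x \in g) w g)).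
  apply: ler_sum => g Hg; have [x Hx Hxg] := Hcov g Hg.
  rewrite (bigD1 x) /=; last by rewrite Hx Hxg.
  rewrite lerDl; apply: sumr_ge0 => i _; exact: Hw0.
have -> : \sum_(g in G) \sum_(x in X | x \in g) w g = \sum_(x in X) \sum_(g in G | x \in g) w g.
  under eq_bigr => g _ do rewrite big_mkcondr.
  rewrite exchange_big /=; apply: eq_bigr => x _; by rewrite big_mkcondr.
rewrite -sum1_card natr_sum; apply: ler_sum => x Hx.
case Hxv: (x \in hvertices G); first by apply: Hwp.
rewrite big_pred0 // => g; apply/andP => -[Hg Hxg].
by move: Hxv; have -> : x \in hvertices G by apply/in_hv; exists g.
Qed.

Lemma tau_ub (G : {set {set T}}) : set0 \notin G ->
  has_ubound (classical_sets.image [set w : {set T} -> R | is_frac_packing G w]%classic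
         (fun w : {set T} -> R => \sum_(e in G) w e)).
Proof.
move=> H0; exists (#|G|%:R) => y [w [Hw0 Hwp] <-].
rewrite -sum1_card natr_sum; apply: ler_sum => g Hg.
have : g != set0 by apply: contraNneq H0 => <-.
case/set0Pn => v Hv.
apply: le_trans (Hwp v _); last by apply/in_hv; exists g.
by apply: (@sum_ge_term G (fun e => v \in e) w g) => // i Hi _; apply: Hw0.
Qed.

Lemma tau_ge (E : {set {set T}}) (I : {set T}) :
  indep E I -> I \subset hvertices E -> (#|I|%:R : R) <= tau_star R (hred (hinduced E I)).
Proof.
move=> Hind HIv.
set G := hred (hinduced E I).
have HG : forall g, g \in G -> exists2 e, e \in E & g = I :&: e /\ I :&: e != set0.
  move=> g; rewrite /G /hred inE => /andP[/imsetP[e] + ->] _.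
  by rewrite inE => /andP[He Hne]; exists e.
have Hsing : forall v g, g \in G -> v \in g -> g = [set v].
  move=> v g /HG[e He [-> _]] /setIP[HvI Hve]; apply/setP => z; rewrite inE.
  apply/setIP/eqP => [[HzI Hze]|->//]; exact: Hind HzI HvI He Hze Hve.
have Hin : forall y, y \in I -> [set y] \in G.
  move=> y Hy; have [e He Hye] := in_hv _ _ (subsetP HIv y Hy).
  have HIe : I :&: e = [set y].
    apply/setP => z; rewrite inE; apply/setIP/eqP => [[HzI Hze]|->//].
    exact: Hind HzI Hy He Hze Hye.
  have Hind1 : [set y] \in hinduced E I.
    apply/imsetP; exists e; last by rewrite HIe.
    by rewrite inE He HIe; apply/set0Pn; exists y; rewrite inE.
  rewrite /G /hred inE Hind1 /=; apply/existsP => -[e' /and3P[He' Hne Hsub]].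
  move/imsetP: He' => [f]; rewrite inE => /andP[Hf _] Hef.
  have Hyf : y \in I :&: f by rewrite -Hef; apply: (subsetP Hsub); rewrite inE.
  have : I :&: f = [set y].
    apply/setP => z; rewrite inE; apply/setIP/eqP => [[HzI Hzf]|->]; last by apply/setIP.
    by move/setIP: Hyf => [_ Hyf']; exact: Hind HzI Hy Hf Hzf Hyf'.
  by move: Hne; rewrite Hef => /eqP; apply.
have H0 : set0 \notin G.
  by apply/negP => /HG[e _ [Heq Hne]]; move: Hne; rewrite -Heq eqxx.
apply: le_trans (ub_le_sup (tau_ub H0) _); last first.
  exists (fun _ => 1); last reflexivity.
  split => // v /in_hv[g0 Hg0 Hvg0].
  rewrite (eq_bigl (fun g => g == [set v])) ?big_pred1_eq //.
  move=> g; apply/andP/eqP => [[Hg Hvg]|->]; first exact: Hsing Hg Hvg.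
  have HvI : v \in I by have [e _ [Heq _]] := HG g0 Hg0; move: Hvg0; rewrite Heq => /setIP[].
  by split; [apply: Hin | rewrite inE].
rewrite sumr_const ler_nat.
have -> : #|I| = #|[set [set y] | y in I]| by rewrite card_imset //; apply: set1_inj.
apply: subset_leq_card; apply/subsetP => g /imsetP[y Hy ->]; exact: Hin.
Qed.

End RealPart.

Lemma red_cover (T : finType) (E : {set {set T}}) (par : {set T} -> {set T})
  (rk : {set T} -> nat) (S X : {set T}) :
  (forall e, e \in E -> par e \in E) ->
  (forall e, e \in E -> par e != e -> rk e < rk (par e)) ->
  X \subset S ->
  (forall e, e \in E -> (exists2 v, v \in S & istop E par v e) -> exists2 x, x \in X & x \in e) ->
  forall g, g \in hred (hinduced E S) -> exists2 x, x \in X & x \in g.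
Proof.
move=> Hp Hr HXS Hcov g; rewrite /hred inE => /andP[Hg Hmax].
move/imsetP: (Hg) => [e0]; rewrite inE => /andP[He0 Hne0] Hg0.
have Hc0 : (e0 \in E) && (S :&: e0 == g) by rewrite He0 Hg0 eqxx.
case: (@arg_maxnP _ e0 (fun e => (e \in E) && (S :&: e == g)) rk Hc0) => e /andP[HeE /eqP Heg] Hemax.
have Hgne : g != set0 by rewrite Hg0.
have [x Hx Hxe] : exists2 x, x \in X & x \in e.
  apply: Hcov => //.
  case: (eqVneq (par e) e) => [Hpe|Hpe].
    move: Hgne; rewrite -Heg => /set0Pn[v /setIP[HvS Hve]].
    by exists v => //; rewrite /istop HeE Hve Hpe eqxx.
  case: (boolP (S :&: e \subset par e)) => Hsub.
    exfalso.
    have HgS : g \subset S :&: par e by rewrite -Heg subsetI subsetIl Hsub.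
    have Hpin : S :&: par e \in hinduced E S.
      apply/imsetP; exists (par e) => //; rewrite inE Hp //=.
      apply/set0Pn; move: Hgne => /set0Pn[v Hv]; exists v; exact: (fintype.subsetP HgS).
    have Heq : S :&: par e = g.
      apply/eqP; apply/negP => /negP Hne; move/negP: Hmax; apply; apply/existsP.
      by exists (S :&: par e); rewrite Hpin Hne HgS.
    have := Hemax (par e); rewrite Hp // Heq eqxx /= => /(_ isT).
    by rewrite leqNgt Hr.
  case/subsetPn: Hsub => v /setIP[HvS Hve] Hvp.
  by exists v => //; rewrite /istop HeE Hve /= Hvp orbT.
by exists x => //; rewrite -Heg inE (fintype.subsetP HXS x Hx) Hxe.
Qed.

Theorem lemma3p7 (R : realType) (T : finType) (E : {set {set T}}) :
  finset.set0 \notin E -> acyclic E -> kappa R E = rho_star R E.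
Proof.
move=> _ [t Htree].
have [par [rk [Hp Hr Ht]]] := struct_ex (leqnn #|E|) Htree.
have Hhv : forall z, z \in hvertices E -> exists2 e, e \in E & z \in e.
  by move=> z /in_hv.
have [I1 [C1 [HI1 HC1 Hpw1 Hcov1 Hcard1]]] := claim1 Hp Hr Ht (leqnn #|hvertices E|) Hhv.
have Hrho1 : (rho_star R E <= (#|C1|%:R : R))%R by apply: rho_le.
have Hrho2 : ((#|I1|%:R : R) <= rho_star R E)%R by apply: rho_ge.
apply/eqP; rewrite eq_le; apply/andP; split.
- rewrite /kappa; apply: bigmax_le.
    by apply: le_trans Hrho2; apply: ler0n.
  move=> S HS.
  pose M := [set e | [exists v in S, istop E par v e]].
  have HM : forall e, e \in M -> exists2 v, v \in S & istop E par v e.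
    by move=> e; rewrite inE => /existsP[v /andP[]]; exists v.
  have [X [I [HXS HIS Hcov Hpw [_ Hcard]]]] := claim2 Hp Hr Ht (leqnn #|M|) HM.
  have Hcov' : forall g, g \in hred (hinduced E S) -> exists2 x, x \in X & x \in g.
    apply: (red_cover Hp Hr HXS) => e HeE [v Hv Hvt]; apply: Hcov.
    by rewrite inE; apply/existsP; exists v; rewrite Hv.
  apply: le_trans (@tau_le R _ _ _ Hcov') _.
  apply: (@le_trans _ _ (#|I|%:R)%R); first by rewrite ler_nat.
  by apply: rho_ge Hpw _; apply: subset_trans HIS HS.
- apply: le_trans Hrho1 _.
  apply: (@le_trans _ _ (#|I1|%:R)%R); first by rewrite ler_nat.
  apply: le_trans (@tau_ge R _ _ _ Hpw1 HI1) _.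
  rewrite /kappa; exact: (@le_bigmax_cond _ _ _ 0%R I1 (fun S => S \subset hvertices E) (fun S => tau_star R (hred (hinduced E S))) HI1).
Qed.
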